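(* The hypergraph $\mathcal{H}$ (defined in the context) is linear, i.e. any two distinct edges of $\mathcal{H}$ share at most one vertex.
   Context: Let $r \geq 2$ and $l \geq 1$ be integers and $q$ a power of an odd prime. Let $\alpha_1, \dots, \alpha_r$ be distinct elements of $\mathbb{F}_q$, and let $m_1, \dots, m_l$ be distinct elements of $\mathbb{F}_q^* = \mathbb{F}_q\setminus\{0\}$ such that $m_s(\alpha_k - \alpha_i) \neq m_t(\alpha_k - \alpha_j)$ whenever $1 \leq s,t \leq l$ and $i,j,k$ are distinct integers in $\{1,\dots,r\}$. For $1 \leq i \leq r$ let $V_i = \mathbb{F}_q \times \mathbb{F}_q \times \{i\}$. For $x,y \in \mathbb{F}_q$, $a \in \mathbb{F}_q^*$, $s \in \{1,\dots,l\}$ let \[ e(x,y,a,m_s) = \{(x + \alpha_i m_s a,\; y + \alpha_i m_s a^2,\; i) : 1 \leq i \leq r\}. \] $\mathcal{H}$ is the $r$-uniform hypergraph with vertex set $V_1 \cup \dots \cup V_r$ and edge set $\{e(x,y,a,m_s) : x,y \in \mathbb{F}_q,\ a \in \mathbb{F}_q^*,\ 1 \leq s \leq l\}$. *)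

(* Defs.v *)
From HB Require Import structures.
From mathcomp Require Import all_boot all_order all_algebra.
Set Implicit Arguments. Unset Strict Implicit. Unset Printing Implicit Defensive.
Import GRing.Theory.
Local Open Scope ring_scope.

(* Vertices: V_i = F_q x F_q x {i}, indices i in 'I_r (i.e. {0..r-1} for {1..r}). *)
Definition hvertex (F : finFieldType) (r : nat) : finType :=
  (F * F * 'I_r)%type.

Definition hedge (F : finFieldType) (r : nat) (alpha : 'I_r -> F)
  (x y a m : F) : {set hvertex F r} :=
  [set ((x + alpha i * m * a, y + alpha i * m * a ^+ 2), i) | i : 'I_r].

Definition hedges (F : finFieldType) (r l : nat) (alpha : 'I_r -> F)
  (m : 'I_l -> F) : {set {set hvertex F r}} :=
  [set hedge alpha xya.1.1 xya.1.2 xya.2.1 (m xya.2.2)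
     | xya in [set u : F * F * (F * 'I_l) | u.2.1 != 0]].

Definition linear_hypergraph (T : finType) (E : {set {set T}}) : Prop :=
  forall e1 e2, e1 \in E -> e2 \in E -> e1 != e2 -> (#|e1 :&: e2| <= 1)%N.

(* Main.v *)
Require Import Defs.
From HB Require Import structures.
From mathcomp Require Import all_boot all_order all_algebra.
From mathcomp Require Import ring.
Import GRing.Theory.
Local Open Scope ring_scope.

Lemma key_lin (F : fieldType) (ai aj x c x' c' : F) :
  ai != aj -> x + ai * c = x' + ai * c' -> x + aj * c = x' + aj * c' ->
  c = c' /\ x = x'.
Proof.
move=> nij e1 e2.
have h : (ai - aj) * (c - c') = 0.
  have -> : (ai - aj) * (c - c') = ((x + ai * c) - (x + aj * c)) - ((x' + ai * c') - (x' + aj * c')) by ring.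
  by rewrite e1 e2 subrr.
move/eqP: h; rewrite mulf_eq0 subr_eq0 (negbTE nij) /= subr_eq0 => /eqP cc.
split=> //; move: e1; rewrite cc => /addIr //.
Qed.

Theorem lemma3p5 (F : finFieldType) (r l : nat)
  (alpha : 'I_r -> F) (m : 'I_l -> F) :
  odd #|F| ->
  (2 <= r)%N -> (1 <= l)%N ->
  injective alpha -> injective m ->
  (forall s, m s != 0) ->
  (forall (s t : 'I_l) (i j k : 'I_r), i != j -> j != k -> i != k ->
     m s * (alpha k - alpha i) != m t * (alpha k - alpha j)) ->
  linear_hypergraph (hedges alpha m).
Proof.
move=> _ _ _ ainj _ _ _ e1 e2 /imsetP[[[x y] [a s]] _ ->] /imsetP[[[x' y'] [b t]] _ ->] neq.
rewrite leqNgt; apply/negP => /card_gt1P[u [v [Hu Hv nuv]]].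
move: Hu Hv; rewrite !inE /hedge /=.
case/andP => /imsetP[i _ Eu] /imsetP[i' _ Eu'].
case/andP => /imsetP[j _ Ev] /imsetP[j' _ Ev'].
have ii' : i = i' by move: (congr1 snd Eu); rewrite Eu'.
have jj' : j = j' by move: (congr1 snd Ev); rewrite Ev'.
subst i' j'.
have nij : alpha i != alpha j.
  apply/negP => /eqP /ainj eij; subst j.
  by move: nuv; rewrite Eu Ev eqxx.
move: Eu' Ev'; rewrite Eu Ev => -[ex1 ey1] [ex2 ey2].
rewrite -!mulrA in ex1 ey1 ex2 ey2.
have [c1 xx] := @key_lin _ _ _ _ _ _ _ nij ex1 ex2.
have [c2 yy] := @key_lin _ _ _ _ _ _ _ nij ey1 ey2.
move: neq; rewrite /hedge /=; subst x' y'.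
suff -> : [set (x + alpha i0 * m s * a, y + alpha i0 * m s * a ^+ 2, i0) | i0 : 'I_r]
  = [set (x + alpha i0 * m t * b, y + alpha i0 * m t * b ^+ 2, i0) | i0 : 'I_r]
  by rewrite eqxx.
by apply: eq_imset => k; rewrite -!mulrA c1 c2.
Qed.
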